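(* Let $G$ be an $r$-regular graph on $m$ vertices with $r\ge 1$ (i.e. $G$ has at least one edge). (a) If $n\ge 2$ is even, then $K_n\boxtimes G$ is $\mathbb{Z}_{nm}$-distance antimagic. (b) If $n\ge 3$ and $m$ are both odd, then $K_n\boxtimes G$ is $\mathbb{Z}_{nm}$-distance antimagic.
   Context: $K_n$ is the complete graph on $n$ vertices. The strong product $G_1\boxtimes G_2$ has vertex set $V(G_1)\times V(G_2)$, with distinct $(x_1,x_2),(y_1,y_2)$ adjacent iff for each $i$ either $x_i=y_i$ or $x_iy_i\in E(G_i)$. For a graph $H$ with $N$ vertices, a $\mathbb{Z}_N$-distance antimagic labelling is a bijection $f:V(H)\to\mathbb{Z}_N$ such that the weights $w_f(x)=\sum_{y\in N(x)} f(y)$ (mod $N$, $N(x)$ the open neighbourhood) are pairwise distinct; $H$ is $\mathbb{Z}_N$-distance antimagic if such a labelling exists. *)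

(* Defs.v *)
From mathcomp Require Import all_boot.
Set Implicit Arguments. Unset Strict Implicit. Unset Printing Implicit Defensive.

Definition simple_graph (T : finType) (e : rel T) : Prop :=
  (forall x y, e x y = e y x) /\ (forall x, ~~ e x x).

Definition nbhd (T : finType) (e : rel T) (x : T) : {set T} := [set y | e x y].

Definition regular (T : finType) (e : rel T) (r : nat) : Prop :=
  forall x : T, #|nbhd e x| = r.

Definition Kn_adj (n : nat) : rel 'I_n := fun i j => i != j.

Definition strong_adj (T1 T2 : finType) (e1 : rel T1) (e2 : rel T2)
  : rel (T1 * T2) :=
  fun x y => (x != y) && ((x.1 == y.1) || e1 x.1 y.1)
                      && ((x.2 == y.2) || e2 x.2 y.2).

(* Z_N-distance antimagic, N = number of vertices; Z_N represented by 'I_N,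
   with weights computed as the nat sum reduced mod N. *)
Definition ZN_weight (T : finType) (e : rel T) (f : T -> 'I_#|T|) (x : T) : nat :=
  (\sum_(y in nbhd e x) (f y : nat)) %% #|T|.

Definition ZN_distance_antimagic_labelling (T : finType) (e : rel T)
  (f : T -> 'I_#|T|) : Prop :=
  bijective f /\ injective (ZN_weight e f).

Definition ZN_distance_antimagic (T : finType) (e : rel T) : Prop :=
  exists f : T -> 'I_#|T|, ZN_distance_antimagic_labelling e f.

(* Main.v *)
Require Import Defs.
From mathcomp Require Import all_boot zify.

Set Implicit Arguments.
Section Gen.
Variables (V : finType) (n : nat) (c : nat -> nat).

Definition lab (x : 'I_n * V) : nat :=
  x.1 + n * ((c x.1 * enum_rank x.2) %% #|V|).

Lemma lab_lt x : lab x < #|{: 'I_n * V}|.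
Proof.
rewrite card_prod card_ord /lab.
have h1 := ltn_ord x.1.
have hm : 0 < #|V| := leq_ltn_trans (leq0n _) (ltn_ord (enum_rank x.2)).
have h2 := ltn_pmod (c x.1 * enum_rank x.2) hm.
move: h1 h2; set a := _ %% _; set i := nat_of_ord _; set m := #|V|.
move=> h1 h2; nia.
Qed.

Lemma dec_eq (i j a b : nat) : i < n -> j < n -> i + n * a = j + n * b -> i = j /\ a = b.
Proof.
move=> hi hj h.
have e1 : i = j.
  have := congr1 (modn^~ n) h => /=.
  by rewrite ![_ + n * _]addnC ![n * _]mulnC !modnMDl !modn_small.
subst j; split => //.
have hn : 0 < n by lia.
move/eqP: h; rewrite eqn_add2l eqn_mul2l; case/orP => [/eqP|/eqP //]; lia.
Qed.

Lemma mod_cancel m a k k' : coprime m a -> k < m -> k' < m ->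
  (a * k) %% m = (a * k') %% m -> k = k'.
Proof.
move=> cop hk hk'.
wlog le : k k' hk hk' / k <= k'.
  move=> W h; case: (leqP k k') => l; first exact: W.
  by symmetry; apply: W => //; apply: ltnW.
move=> /eqP; rewrite eq_sym eqn_mod_dvd; last by rewrite leq_mul2l le orbT.
rewrite -mulnBr Gauss_dvdr // => d.
case: (posnP (k' - k)) => [|p]; first lia.
have := dvdn_leq p d; lia.
Qed.

Lemma lab_inj : (forall i, i < n -> coprime #|V| (c i)) -> injective lab.
Proof.
move=> cop [i v] [j w]; rewrite /lab /=.
move=> h; case: (@dec_eq _ _ _ _ (ltn_ord i) (ltn_ord j) h).
move/val_inj => ij; subst j.
move/mod_cancel => {}h.
have := h (cop i (ltn_ord i)) (ltn_ord _) (ltn_ord _).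
by move/val_inj/enum_rank_inj ->.
Qed.

End Gen.
Section Gen2.
Variables (V : finType) (n : nat) (c : nat -> nat).
Local Notation labc := (@lab V n c).

Lemma colsum w : #|V| %| \sum_(i < n) c i ->
  (\sum_(j < n) labc (j, w)) %% (n * #|V|) = (\sum_(j < n) (j : nat)) %% (n * #|V|).
Proof.
move=> dv; rewrite /lab /= big_split /= -big_distrr /= -modnDmr -muln_modr.
have -> : (\sum_(i < n) (c i * enum_rank w) %% #|V|) %% #|V| = 0.
  rewrite modn_summ -big_distrl /=; apply/eqP; exact: dvdn_mulr.
by rewrite muln0 addn0.
Qed.

Lemma gen_antimagic (e : rel V) r : (forall v, ~~ e v v) -> regular e r ->
 (0 < #|V| -> (forall i, i < n -> coprime #|V| (c i)) /\ #|V| %| \sum_(i < n) c i) ->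
 ZN_distance_antimagic (strong_adj (@Kn_adj n) e).
Proof.
move=> irr reg hyp.
pose f (x : 'I_n * V) : 'I_#|{: 'I_n * V}| := Ordinal (lab_lt V c x).
have mpos (x : 'I_n * V) : 0 < #|V| := leq_ltn_trans (leq0n _) (ltn_ord (enum_rank x.2)).
have finj : injective f.
  move=> x y /(congr1 val) /=; apply: (@lab_inj V n c); exact: (hyp (mpos x)).1.
set N := #|{: 'I_n * V}|.
have key x : (ZN_weight (strong_adj (@Kn_adj n) e) f x + labc x) %% N
             = (r.+1 * \sum_(j < n) (j : nat)) %% N.
  case: x => i0 v0.
  rewrite /ZN_weight modnDml.
  set cl := [set w | (v0 == w) || e v0 w].
  have -> : \sum_(y in nbhd (strong_adj (Kn_adj (n:=n)) e) (i0, v0)) (f y : nat) + labc (i0, v0)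
      = \sum_(y : 'I_n * V | y.2 \in cl) labc y.
    rewrite [RHS](bigD1 (i0, v0)) /=; last by rewrite inE eqxx.
    rewrite addnC; congr (_ + _); apply: eq_bigl => -[j w].
    rewrite !inE /strong_adj /Kn_adj /= orbN andbT.
    by rewrite andbC [(i0, v0) == _]eq_sym.
  have -> : \sum_(y : 'I_n * V | y.2 \in cl) labc y = \sum_(w in cl) \sum_(j < n) labc (j, w).
    rewrite exchange_big pair_big /=; apply: eq_big => -[] //.
  have cardcl : #|cl| = r.+1.
    have -> : cl = v0 |: nbhd e v0 by apply/setP => w; rewrite !inE eq_sym.
    by rewrite cardsU1 inE irr reg.
  have NE : N = n * #|V| by rewrite /N card_prod card_ord.
  have dv := (hyp (mpos (i0, v0))).2.
  rewrite NE -modn_summ ?card_prod ?card_ord.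
  under eq_bigr => w _ do rewrite colsum //.
  by rewrite modn_summ sum_nat_const cardcl.
exists f; split; first by apply: inj_card_bij => //; rewrite card_ord.
move=> x y h.
have := key x; rewrite h -(key y) => /eqP; rewrite eqn_modDl => /eqP.
rewrite !modn_small ?(lab_lt V c) // => hl.
by apply: finj; apply: val_inj.
Qed.
End Gen2.

Lemma sum_split a b x y : a <= b ->
  \sum_(i < b) (if i < a then x else y) = a * x + (b - a) * y.
Proof.
move=> ab.
rewrite -(big_mkord xpredT (fun i => if i < a then x else y)).
rewrite (@big_cat_nat _ _ _ a) //=.
rewrite (@eq_big_nat _ _ _ 0 a _ (fun _ => x)); last by move=> i /andP[_ ->].
rewrite (@eq_big_nat _ _ _ a b _ (fun _ => y)); last first.
  by move=> i /andP[h _]; rewrite ltnNge h.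
by rewrite !sum_nat_const_nat subn0.
Qed.

Theorem mainTheorem18 (V : finType) (e : rel V) (r n : nat) :
  simple_graph e -> regular e r -> 1 <= r ->
  ((2 <= n -> ~~ odd n -> ZN_distance_antimagic (strong_adj (@Kn_adj n) e)) /\
   (3 <= n -> odd n -> odd #|V| -> ZN_distance_antimagic (strong_adj (@Kn_adj n) e))).
Proof.
move=> [_ irr] reg r1; split.
- move=> n2 ev.
  apply: (@gen_antimagic V n (fun i => if i < n./2 then 1 else #|V|.-1) e r) => // mpos.
  split.
    by move=> i _; case: ifP => _; [exact: coprimen1 | exact: coprimenP].
  have hn := even_halfK ev; rewrite -addnn in hn.
  rewrite sum_split; last by lia.
  apply/dvdnP; exists n./2; move: hn mpos; set h := n./2; set m := #|V|; nia.
- move=> n3 od om.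
  apply: (@gen_antimagic V n (fun i => if i == 0 then 2 else if i < n./2 then 1 else #|V|.-1) e r) => // mpos.
  split.
    move=> i _; case: ifP => _; first by rewrite coprime_sym coprime2n.
    by case: ifP => _; [exact: coprimen1 | exact: coprimenP].
  have hn := odd_halfK od; rewrite -addnn in hn.
  case: n n3 od hn => [//|n'] n3 od hn.
  rewrite big_ord_recl /=.
  have -> : \sum_(i < n') (if bump 0 i == 0 then 2 else if bump 0 i < n'.+1./2 then 1 else #|V|.-1)
          = \sum_(i < n') (if i < n'.+1./2 - 1 then 1 else #|V|.-1).
    apply: eq_bigr => i _; rewrite /bump /= add1n /=.
    by congr (if _ then _ else _); move: hn n3; set h := n'.+1./2; lia.
  rewrite sum_split; last by move: hn n3; set h := n'.+1./2; lia.
  apply/dvdnP; exists n'.+1./2.+1; move: hn mpos n3; set h := n'.+1./2; set m := #|V|; nia.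
Qed.
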